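(* Let $k\ge 2$ and $n$ be positive integers. If $\mathcal{F}\subset\binom{[n]}{k}$ is an intersecting family satisfying $\binom{[n]}{k-1}\subset\mathcal{D}(\mathcal{F})$, then $n\le 3k-2$.
   Context: $[n]=\{1,\dots,n\}$; $\binom{S}{j}$ is the family of all $j$-element subsets of $S$. For a family $\mathcal{F}$ of sets, $\mathcal{D}(\mathcal{F})=\{F\setminus F' : F,F'\in\mathcal{F}\}$. A family is intersecting if any two of its members (not necessarily distinct) have nonempty intersection. *)

(* Defs.v *)
From mathcomp Require Import all_boot.
Set Implicit Arguments. Unset Strict Implicit. Unset Printing Implicit Defensive.

(* Ground set [n] is represented by 'I_n = {0,...,n-1}. *)

Definition diff_family (T : finType) (F : {set {set T}}) : {set {set T}} :=
  [set A :\: B | A in F, B in F].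

Definition intersecting (T : finType) (F : {set {set T}}) : Prop :=
  forall A B, A \in F -> B \in F -> A :&: B != set0.

(* Main.v *)
Require Import Defs.
From mathcomp Require Import all_boot zify.

Lemma ex_sub (T : finType) (X : {set T}) m : m <= #|X| ->
  exists Y : {set T}, Y \subset X /\ #|Y| = m.
Proof.
elim: m => [|m IH] H; first by exists set0; rewrite sub0set cards0.
have [Y [sYX cY]] := IH (ltnW H).
have : 0 < #|X :\: Y| by rewrite cardsD (setIidPr sYX); lia.
case/card_gt0P => x; rewrite inE => /andP [xY xX].
exists (x |: Y); rewrite cardsU1 xY cY; split => //.
by rewrite subUset sub1set xX.
Qed.

Lemma diffP {T : finType} {F : {set {set T}}} {B} :
  B \in diff_family F -> exists X Y, [/\ X \in F, Y \in F & B = X :\: Y].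
Proof. by case/imset2P => X Y XF YF ->; exists X, Y. Qed.

Section S.
Variables (n k : nat) (F : {set {set 'I_n}}).
Hypotheses (Hk : 2 <= k) (HF : forall A, A \in F -> #|A| = k)
  (Hint : intersecting F)
  (HD : forall B : {set 'I_n}, #|B| = k.-1 -> B \in diff_family F).

Lemma ext (A B : {set 'I_n}) : A \in F -> B \subset ~: A -> #|B| = k.-1 ->
  exists c, [/\ c \in A, c \notin B & c |: B \in F].
Proof.
move=> AF sB cB; have [X [Y [XF YF E]]] := diffP (HD B cB).
have sBX : B \subset X by rewrite E subsetDl.
have : 0 < #|X :\: B| by rewrite cardsD (setIidPr sBX) HF //; lia.
case/card_gt0P => c; rewrite inE => /andP [cB' cX].
have EX : c |: B = X.
  apply/eqP; rewrite eqEcard subUset sub1set cX sBX cardsU1 cB' HF //; lia.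
exists c; split => //; last by rewrite EX.
have := Hint _ _ XF AF; case/set0Pn => x; rewrite inE => /andP [xX xA].
have : x \in c |: B by rewrite EX.
rewrite in_setU1 => /orP [/eqP <- //|xB].
by move/subsetP: sB => /(_ x xB); rewrite inE xA.
Qed.

Lemma link (A B1 B2 : {set 'I_n}) c1 c2 :
  B1 \subset ~: A -> B2 \subset ~: A -> [disjoint B1 & B2] ->
  c1 \in A -> c2 \in A -> c1 |: B1 \in F -> c2 |: B2 \in F -> c1 = c2.
Proof.
move=> s1 s2 d a1 a2 F1 F2.
have := Hint _ _ F1 F2; case/set0Pn => x; rewrite inE !in_setU1.
case/andP => /orP [/eqP xc1 | x1] /orP [/eqP xc2 | x2].
- by rewrite -xc1 -xc2.
- by move/subsetP: s2 => /(_ x x2); rewrite inE xc1 a1.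
- by move/subsetP: s1 => /(_ x x1); rewrite inE xc2 a2.
- by rewrite (disjointFr d x1) in x2.
Qed.

End S.

Theorem theorem2 (n k : nat) (F : {set {set 'I_n}}) :
  2 <= k -> 0 < n ->
  (forall A, A \in F -> #|A| = k) ->
  intersecting F ->
  (forall B : {set 'I_n}, #|B| = k.-1 -> B \in diff_family F) ->
  n <= 3 * k - 2.
Proof.
move=> Hk Hn HF Hint HD.
rewrite leqNgt; apply/negP => Hn3.
have cT : #|[set: 'I_n]| = n by rewrite cardsT card_ord.
have [B0 [_ cB0]] := @ex_sub _ [set: 'I_n] k.-1 ltac:(rewrite cT; lia).
have [A [Y0 [AF _ _]]] := diffP (HD _ cB0).
have cA := HF _ AF.
have cS : #|~: A| = n - k by have := cardsC A; rewrite card_ord; lia.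
have [B [sB cB]] := @ex_sub _ (~: A) k.-1 ltac:(rewrite cS; lia).
have [c [cA' cB' cF]] := @ext n k F Hk HF Hint HD _ _ AF sB cB.
have : 0 < #|B| by lia.
case/card_gt0P => p pB.
set Q := B :\ p.
have cQ : #|Q| = k.-2 by rewrite /Q; have := cardsD1 p B; rewrite pB add1n; lia.
have sQB : Q \subset B by apply: subsetDl.
have cQ' : c \notin Q by apply: contra cB'; apply/subsetP.
have cZ : #|c |: Q| = k.-1 by rewrite cardsU1 cQ' cQ; lia.
have [X [G [XF GF EZ]]] := diffP (HD _ cZ).
have dGZ : forall x, x \in G -> x \notin c |: Q.
  by move=> x xG; rewrite EZ inE xG.
have cG : c \notin G by apply/negP => /dGZ; rewrite setU11.
have sT : #|G :&: ~: A| <= k.-1.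
  have := Hint _ _ GF AF; case/set0Pn => y; rewrite inE => /andP [yG yA].
  have : G :&: ~: A \subset G :\ y.
    apply/subsetP => z; rewrite !inE => /andP [zG zA]; rewrite zG andbT.
    by apply/eqP => zy; rewrite zy yA in zA.
  by move/subset_leq_card; have := cardsD1 y G; rewrite yG HF // add1n => ->.
set T := ~: A :\: G.
have cTT : k <= #|T| by rewrite /T cardsD setIC cS; have := sT; have := Hn3; have := Hk; move: (#|G :&: ~: A|) => m; clear; lia.
have sQT : Q \subset T.
  apply/subsetP => z zQ; rewrite !inE.
  have : z \notin G by apply: contraL zQ => /dGZ; rewrite in_setU1 negb_or => /andP [].
  move=> ->; move/subsetP: sB => /(_ z (subsetP sQB z zQ)); rewrite inE => -> //.
have : 0 < #|T :\: Q| by rewrite cardsD (setIidPr sQT) cQ; have := cTT; have := Hk; move: #|T| => m; clear; lia.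
case/card_gt0P => t; rewrite inE => /andP [tQ tT].
set B' := t |: Q.
have cB'' : #|B'| = k.-1 by rewrite cardsU1 tQ cQ; move: Hk; clear; lia.
have sB'T : B' \subset T by rewrite subUset sub1set tT sQT.
have sTS : T \subset ~: A by apply: subsetDl.
have sB'S : B' \subset ~: A by apply: subset_trans sTS.
have ctB : #|t |: B| <= k by rewrite cardsU1 cB; case: (t \in B); move: Hk; clear; lia.
have [B1 [sB1 cB1]] := @ex_sub _ (~: A :\: (t |: B)) k.-1
   ltac:(rewrite cardsD cS; have := subset_leq_card (subsetIr (~: A) (t |: B)); have := ctB; have := Hn3; have := Hk; move: #|t |: B| => a; move: #|_ :&: _| => b; clear; lia).
have sB1S : B1 \subset ~: A by apply: subset_trans sB1 (subsetDl _ _).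
have d1 : [disjoint B1 & B].
  rewrite disjoint_subset; apply/subsetP => z /(subsetP sB1); rewrite !inE => /andP [+ _].
  by rewrite negb_or => /andP [_ ->].
have d2 : [disjoint B1 & B'].
  rewrite disjoint_subset; apply/subsetP => z /(subsetP sB1); rewrite !inE => /andP [+ _].
  rewrite negb_or => /andP [/negPf zt zB].
  rewrite zt /=; apply/negP => /andP [_ zB2]; by rewrite zB2 in zB.
have [c1 [c1A _ c1F]] := @ext n k F Hk HF Hint HD _ _ AF sB1S cB1.
have e1 := @link n F Hint _ _ _ _ _ sB1S sB d1 c1A cA' c1F cF.
have [c2 [c2A _ c2F]] := @ext n k F Hk HF Hint HD _ _ AF sB'S cB''.
have e2 := @link n F Hint _ _ _ _ _ sB'S sB1S ltac:(by rewrite disjoint_sym) c2A c1A c2F c1F.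
subst c1 c2.
have := Hint _ _ c2F GF; case/set0Pn => z; rewrite inE => /andP [+ zG].
rewrite in_setU1; case/orP => [/eqP zc | zB']; first by rewrite -zc zG in cG.
by move/subsetP: sB'T => /(_ z zB'); rewrite inE zG.
Qed.
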